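(* There exist a tight $7$-point simplex and a tight $8$-point simplex in $G(2,4)$.
   Context: $G(2,4)$ is the space of $2$-dimensional linear subspaces of $\mathbb{R}^4$, each identified with its orthogonal projection matrix. A tight $N$-point simplex in $G(m,n)$ is a set of $N$ distinct subspaces with projection matrices $\Pi_1,\dots,\Pi_N$ such that $\operatorname{tr}(\Pi_i\Pi_j)=\frac{m(Nm-n)}{n(N-1)}$ for all $i\ne j$; for $(m,n)=(2,4)$ this value is $\frac{N-2}{N-1}$. *)

(* Defs.v *)
From HB Require Import structures.
From mathcomp Require Import all_boot all_order all_algebra.
From mathcomp Require Import Rstruct.
From Stdlib Require Import Reals.
Set Implicit Arguments. Unset Strict Implicit. Unset Printing Implicit Defensive.
Import Order.TTheory GRing.Theory Num.Theory.
Local Open Scope ring_scope.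

(* An element of the Grassmannian G(m,n): an m-dimensional linear subspace of
   R^n, identified with its orthogonal projection matrix, i.e. a symmetric
   idempotent n x n real matrix of rank m. *)
Definition grassmannian (m n : nat) (P : 'M[R]_n) : Prop :=
  P^T = P /\ P *m P = P /\ \rank P = m.

Definition tight_value (m n N : nat) : R :=
  (m%:R * (N%:R * m%:R - n%:R)) / (n%:R * (N%:R - 1)).

Definition tight_simplex (m n N : nat) (Pi : 'I_N -> 'M[R]_n) : Prop :=
  injective Pi /\
  (forall i, grassmannian m (Pi i)) /\
  (forall i j, i != j -> \tr (Pi i *m Pi j) = tight_value m n N).

Arguments tight_simplex m n N Pi : clear implicits.

(* Main.v *)
Require Import Defs.
From mathcomp Require Import all_boot all_order all_algebra.
From mathcomp Require Import Rstruct.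
From Stdlib Require Import Reals.
From HB Require Import structures.
From mathcomp Require Import ring lra.
From Stdlib Require Import Lia.
From mathcomp Require Import zify.
Set Implicit Arguments. Unset Strict Implicit. Unset Printing Implicit Defensive.
Import Order.TTheory GRing.Theory Num.Theory.
Local Open Scope ring_scope.

Ltac rat_field := field; rewrite ?pnatr_eq0 //.

(* ---------- generic construction: P(a,b) = (I + L_a R_b)/2 ---------- *)
Definition vec := (R * R * R)%type.
Definition dot (a b : vec) := a.1.1 * b.1.1 + a.1.2 * b.1.2 + a.2 * b.2.

Definition Ment (a b : vec) (i j : nat) :=
  let a1 := a.1.1 in let a2 := a.1.2 in let a3 := a.2 in
  let b1 := b.1.1 in let b2 := b.1.2 in let b3 := b.2 in
  match i, j with
  | 0,0 => -a1*b1-a2*b2-a3*b3 | 0,1 => a2*b3-a3*b2 | 0,2 => -a1*b3+a3*b1 | 0,3 => a1*b2-a2*b1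
  | 1,0 => a2*b3-a3*b2 | 1,1 => -a1*b1+a2*b2+a3*b3 | 1,2 => -a1*b2-a2*b1 | 1,3 => -a1*b3-a3*b1
  | 2,0 => -a1*b3+a3*b1 | 2,1 => -a1*b2-a2*b1 | 2,2 => a1*b1-a2*b2+a3*b3 | 2,3 => -a2*b3-a3*b2
  | 3,0 => a1*b2-a2*b1 | 3,1 => -a1*b3-a3*b1 | 3,2 => -a2*b3-a3*b2 | 3,3 => a1*b1+a2*b2-a3*b3
  | _,_ => 0 end.

Definition Pm (a b : vec) : 'M[R]_4 :=
  \matrix_(i, j) ((((i : nat) == j)%:R + Ment a b i j) / 2).

Lemma Pm_tr a b : (Pm a b)^T = Pm a b.
Proof.
apply/matrixP => i j; rewrite !mxE.
case: i => [[|[|[|[|i]]]] Hi] //; case: j => [[|[|[|[|j]]]] Hj] //=; ring.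
Qed.

Lemma Pm_trace a b : \tr (Pm a b) = 2.
Proof.
rewrite /mxtrace !big_ord_recr !big_ord0 /= !mxE /=. rat_field.
Qed.

Lemma Pm_trmul a b c d : \tr (Pm a b *m Pm c d) = 1 + dot a c * dot b d.
Proof.
rewrite /mxtrace !big_ord_recr !big_ord0 /= !mxE /=.
rewrite !big_ord_recr !big_ord0 /= !mxE /= /dot; rat_field.
Qed.

Lemma Pm_idem a b : dot a a = 1 -> dot b b = 1 -> Pm a b *m Pm a b = Pm a b.
Proof.
rewrite /dot => ha hb.
have key : forall i j : 'I_4, (Pm a b *m Pm a b) i j =
  (((i : nat) == j)%:R * (1 + dot a a * dot b b) + 2 * Ment a b i j) / 4.
  move=> i j; rewrite !mxE !big_ord_recr !big_ord0 /= !mxE /dot.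
  case: i => [[|[|[|[|i]]]] Hi] //; case: j => [[|[|[|[|j]]]] Hj] //=; rat_field.
apply/matrixP => i j; rewrite key /dot ha hb !mxE; rat_field.
Qed.

Lemma tr_pid4 (r : nat) : leq r 4 -> \tr (pid_mx r : 'M[R]_4) = r%:R.
Proof.
move=> hr; rewrite /mxtrace !big_ord_recr !big_ord0 /= !mxE /=.
by case: r hr => [|[|[|[|[|r]]]]] //= _; ring.
Qed.

Lemma rank_idem (P : 'M[R]_4) : P *m P = P -> \tr P = (\rank P)%:R.
Proof.
move=> hP.
have eP : col_ebase P *m pid_mx (\rank P) *m row_ebase P = P by rewrite mulmx_ebase.
have uL := col_ebase_unit P.
have uU := row_ebase_unit P.
move: eP hP uL uU.
move: (col_ebase P) (row_ebase P) (\rank P) (rank_leq_row P) => L U r hr eP hP uL uU.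
have key : pid_mx r *m (U *m L) *m pid_mx r = pid_mx r :> 'M[R]_4.
  have h1 : L *m (pid_mx r *m (U *m L) *m pid_mx r) *m U = L *m pid_mx r *m U.
    transitivity ((L *m pid_mx r *m U) *m (L *m pid_mx r *m U)); first by rewrite !mulmxA.
    by rewrite eP hP.
  have h2 := congr1 (fun X => invmx L *m X *m invmx U) h1.
  by move: h2 => /=; rewrite !mulmxA mulVmx // mul1mx -!mulmxA !mulmxV // !mulmx1.
rewrite -eP mxtrace_mulC mulmxA.
have -> : \tr (U *m L *m pid_mx r) = \tr (pid_mx r *m (U *m L) *m (pid_mx r : 'M[R]_4)).
  by rewrite [LHS]mxtrace_mulC [RHS]mxtrace_mulC !mulmxA pid_mx_id.
by rewrite key tr_pid4.
Qed.

Lemma Pm_grass a b : dot a a = 1 -> dot b b = 1 -> grassmannian 2 (Pm a b).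
Proof.
move=> ha hb; have hi := Pm_idem ha hb.
split; first exact: Pm_tr.
split; first exact: hi.
have := rank_idem hi; rewrite Pm_trace => h.
by apply/eqP; rewrite -(eqr_nat R) -h.
Qed.

Lemma simplex_of (N : nat) (A B : 'I_N -> vec) :
  (forall i, dot (A i) (A i) = 1) -> (forall i, dot (B i) (B i) = 1) ->
  tight_value 2 4 N != 2 ->
  (forall i j, i != j -> 1 + dot (A i) (A j) * dot (B i) (B j) = tight_value 2 4 N) ->
  tight_simplex 2 4 N (fun i => Pm (A i) (B i)).
Proof.
move=> hA hB hne hp; split; last split.
- move=> i j e; apply/eqP; apply: contraNT hne => nij.
  rewrite -(hp i j nij) -Pm_trmul e Pm_idem // Pm_trace.
  by [].
- by move=> i; apply: Pm_grass.
- by move=> i j nij; rewrite Pm_trmul hp.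
Qed.


Definition q8 := @Num.sqrt R 2.
Definition X8 := (3 - q8) / 7.
Definition Y8 := (3 + q8) / 7.
Definition x8 := Num.sqrt X8.
Definition y8 := Num.sqrt Y8.
Definition r1 := Num.sqrt (1 - X8).
Definition r2 := Num.sqrt (1 - Y8).

Lemma q8_facts : q8 ^+ 2 = 2 /\ 0 <= q8 /\ q8 <= 3 / 2.
Proof.
have h2 : q8 ^+ 2 = 2 by rewrite /q8 sqr_sqrtr //; lra.
have h0 : 0 <= q8 by rewrite /q8 sqrtr_ge0.
split; first exact: h2. split; first exact: h0. nra.
Qed.

Lemma sq_facts : x8 ^+ 2 = X8 /\ y8 ^+ 2 = Y8 /\ r1 ^+ 2 = 1 - X8 /\ r2 ^+ 2 = 1 - Y8.
Proof.
have [h2 [h0 h3]] := q8_facts.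
rewrite /x8 /y8 /r1 /r2 !sqr_sqrtr // /X8 /Y8; lra.
Qed.

Definition A8 (i : 'I_8) : vec :=
  match nat_of_ord i with
  | 0 => (0, r1, x8) | 1 => (0, -r2, -y8) | 2 => (r1, 0, x8) | 3 => (0, r2, -y8)
  | 4 => (-r2, 0, -y8) | 5 => (r2, 0, -y8) | 6 => (r1, 0, -x8) | _ => (0, r1, -x8) end.
Definition B8 (i : 'I_8) : vec :=
  match nat_of_ord i with
  | 0 => (r2, 0, -y8) | 1 => (r1, 0, x8) | 2 => (0, -r2, y8) | 3 => (-r1, 0, x8)
  | 4 => (0, -r1, -x8) | 5 => (0, r1, -x8) | 6 => (0, -r2, -y8) | _ => (r2, 0, y8) end.

Lemma tv8 : tight_value 2 4 8 = 6 / 7.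
Proof. rewrite /tight_value !RealsE /=. rat_field. Qed.

Theorem part8 : exists Pi : 'I_8 -> 'M[R]_4, tight_simplex 2 4 _ Pi.
Proof.
have [hq2 [hq0 hq3]] := q8_facts.
have [hx [hy [hr1 hr2]]] := sq_facts.
have m1 : x8 ^+ 2 * y8 ^+ 2 = 1 / 7 by rewrite hx hy /X8 /Y8; nra.
have m2 : r1 ^+ 2 * r2 ^+ 2 = 2 / 7 by rewrite hr1 hr2 /X8 /Y8; nra.
have m3 : r1 ^+ 2 * y8 ^+ 2 = (2 + q8) / 7 by rewrite hr1 hy /X8 /Y8; nra.
have m4 : x8 ^+ 2 * r2 ^+ 2 = (2 - q8) / 7 by rewrite hx hr2 /X8 /Y8; nra.
exists (fun i => Pm (A8 i) (B8 i)); apply: simplex_of.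
- by case=> [[|[|[|[|[|[|[|[|i]]]]]]]] Hi] //; rewrite /A8 /dot /=; lra.
- by case=> [[|[|[|[|[|[|[|[|i]]]]]]]] Hi] //; rewrite /B8 /dot /=; lra.
- rewrite tv8; apply/eqP => h; lra.
- rewrite tv8 => i j.
  case: i => [[|[|[|[|[|[|[|[|i]]]]]]]] Hi] //; case: j => [[|[|[|[|[|[|[|[|j]]]]]]]] Hj] //;
  rewrite /A8 /B8 /dot /= => _; lra.
Qed.


Bind Scope ring_scope with R.

Lemma cos2PI : cos (2 * PI) = 1.
Proof. have := cos_2PI. rewrite !RealsE /=. done. Qed.
Lemma sin2PI : sin (2 * PI) = 0.
Proof. have := sin_2PI. rewrite !RealsE /=. done. Qed.
Lemma sinPI : sin PI = 0.
Proof. exact: sin_PI. Qed.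
Lemma sinB x y : sin (x - y) = sin x * cos y - cos x * sin y.
Proof. exact: sin_minus. Qed.
Lemma cosB x y : cos (x - y) = cos x * cos y + sin x * sin y.
Proof. exact: cos_minus. Qed.
Lemma cosN x : cos (- x) = cos x.
Proof. exact: cos_neg. Qed.
Lemma cos2sin2 x : cos x * cos x + sin x * sin x = 1.
Proof. have := sin2_cos2 x. rewrite /Rsqr !RealsE. lra. Qed.
Lemma PI_gt0 : 0 < PI.
Proof. apply/RltP; exact: PI_RGT_0. Qed.

Definition u7 := PI / 7.
Definition t7 := 2 * u7.

Lemma sinu7 : 0 < sin u7.
Proof.
have h := PI_gt0.
apply/RltP; apply: sin_gt_0; apply/RltP; rewrite /u7 ?RealsE /=; lra.
Qed.

Lemma sinDiff y z w : y + u7 = z -> y - u7 = w -> 2 * cos y * sin u7 = sin z - sin w.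
Proof. move=> <- <-; rewrite sinD sinB; ring. Qed.

Lemma keyC : cos (1%:R * t7) + cos (2%:R * t7) + cos (3%:R * t7) = - 1 / 2.
Proof.
have e1 : 2 * cos (1%:R * t7) * sin u7 = sin (3 * u7) - sin u7
  by apply: sinDiff; rewrite /t7; ring.
have e2 : 2 * cos (2%:R * t7) * sin u7 = sin (5 * u7) - sin (3 * u7)
  by apply: sinDiff; rewrite /t7; ring.
have e3 : 2 * cos (3%:R * t7) * sin u7 = sin PI - sin (5 * u7).
  by apply: sinDiff; rewrite /t7 /u7; rat_field.
rewrite sinPI in e3.
have hs := sinu7.
have : (2 * (cos (1%:R * t7) + cos (2%:R * t7) + cos (3%:R * t7)) + 1) * sin u7 = 0.
  lra.
move/eqP; rewrite mulf_eq0 => /orP [/eqP h|]; first lra.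
by move/eqP => h; move: hs; rewrite h ltxx.
Qed.

Lemma cos_per x (n : nat) : cos (x + n%:R * (2 * PI)) = cos x.
Proof.
elim: n => [|n IH]; first by rewrite mul0r addr0.
have -> : x + n.+1%:R * (2 * PI) = (x + n%:R * (2 * PI)) + 2 * PI
  by rewrite -addn1 natrD; ring.
by rewrite cosD IH cos2PI sin2PI; ring.
Qed.

Lemma cmod1 (m n q : nat) : m = (n + 7 * q)%N -> cos (m%:R * t7) = cos (n%:R * t7).
Proof.
move=> ->; rewrite -(cos_per (n%:R * t7) q); congr cos.
rewrite natrD natrM /t7 /u7; rat_field.
Qed.

Lemma cmod2 (m n q : nat) : (m + n)%N = (7 * q)%N -> cos (m%:R * t7) = cos (n%:R * t7).
Proof.
move=> e; rewrite -[RHS]cosN -[RHS](cos_per _ q); congr cos.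
have : ((m + n)%N)%:R = ((7 * q)%N)%:R :> R by rewrite e.
rewrite natrD natrM /t7 /u7 => h.
have -> : m%:R = 7%:R * q%:R - n%:R :> R by rewrite -h; ring.
rat_field.
Qed.

Definition Gn (k : nat) := cos (k%:R * t7) + cos ((2 * k)%:R * t7) + cos ((4 * k)%:R * t7).

Lemma Gn_val (k : nat) : leq 1 k -> leq k 6 -> Gn k = - 1 / 2.
Proof.
move=> h0 h7; rewrite /Gn -keyC.
case: k h0 h7 => [|[|[|[|[|[|[|k]]]]]]] //= _ _.
- by rewrite (@cmod2 (4 * 1) 3 1) //; ring.
- by rewrite (@cmod2 (2 * 2) 3 1) // (@cmod1 (4 * 2) 1 1) //; ring.
- by rewrite (@cmod2 (2 * 3) 1 1) // (@cmod1 (4 * 3) 5 1) // (@cmod2 5 2 1) //; ring.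
- by rewrite (@cmod2 4 3 1) // (@cmod1 (2 * 4) 1 1) // (@cmod1 (4 * 4) 2 2) //; ring.
- by rewrite (@cmod2 5 2 1) // (@cmod1 (2 * 5) 3 1) // (@cmod1 (4 * 5) 6 2) // (@cmod2 6 1 1) //; ring.
- by rewrite (@cmod2 6 1 1) // (@cmod1 (2 * 6) 5 1) // (@cmod2 5 2 1) // (@cmod1 (4 * 6) 3 3) //; ring.
Qed.

Definition s7 := @Num.sqrt R (2 / 3).
Definition h7 := @Num.sqrt R (1 / 3).
Definition th (i : nat) := i%:R * t7.
Definition A7 (i : 'I_7) : vec := (cos (th i), sin (th i), 0).
Definition B7 (i : 'I_7) : vec := (s7 * cos (3 * th i), s7 * sin (3 * th i), h7).

Lemma s7h7 : s7 ^+ 2 = 2 / 3 /\ h7 ^+ 2 = 1 / 3.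
Proof. by rewrite /s7 /h7 !sqr_sqrtr //; lra. Qed.

Lemma G_even x : cos x + cos (2 * x) + cos (4 * x) = cos (- x) + cos (2 * - x) + cos (4 * - x).
Proof. by rewrite !mulrN !cosN. Qed.

Lemma pair7 (i j : nat) : leq i.+1 7 -> leq j.+1 7 -> i != j ->
  cos (th i - th j) * (2 / 3 * cos (3 * (th i - th j)) + 1 / 3) = - 1 / 6.
Proof.
move=> hi hj nij.
set d := th i - th j.
have e4 : cos (4 * d) = cos (3 * d) * cos d - sin (3 * d) * sin d.
  by rewrite -cosD; congr cos; rewrite ?RealsE; ring.
have e2 : cos (2 * d) = cos (3 * d) * cos d + sin (3 * d) * sin d.
  by rewrite -cosB; congr cos; rewrite ?RealsE; ring.
suff : cos d + cos (2 * d) + cos (4 * d) = - 1 / 2 by lra.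
have [lt_ji|lt_ij] := ltnP j i.
- have -> : d = (subn i j)%:R * t7 by rewrite /d /th natrB 1?ltnW //; ring.
  have := @Gn_val (subn i j); rewrite /Gn => <-; [| by rewrite subn_gt0 | by lia].
  by rewrite !natrM; congr (_ + _ + _); congr cos; ring.
- have ne : leq i.+1 j by rewrite ltn_neqAle nij lt_ij.
  have -> : d = - ((subn j i)%:R * t7) by rewrite /d /th natrB 1?ltnW //; ring.
  rewrite -G_even.
  have := @Gn_val (subn j i); rewrite /Gn => <-; [| by rewrite subn_gt0 | by lia].
  by rewrite !natrM; congr (_ + _ + _); congr cos; ring.
Qed.

Lemma tv7 : tight_value 2 4 7 = 5 / 6.
Proof. rewrite /tight_value !RealsE /=. rat_field. Qed.

Theorem part7 : exists Pi : 'I_7 -> 'M[R]_4, tight_simplex 2 4 _ Pi.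
Proof.
have [hs hh] := s7h7.
exists (fun i => Pm (A7 i) (B7 i)); apply: simplex_of.
- by move=> i; rewrite /A7 /dot /=; have := cos2sin2 (th i); lra.
- move=> i; rewrite /B7 /dot /=.
  transitivity (s7 ^+ 2 * (cos (3 * th i) * cos (3 * th i) + sin (3 * th i) * sin (3 * th i)) + h7 ^+ 2).
    by ring.
  rewrite hs hh cos2sin2; rat_field.
- rewrite tv7; apply/eqP => h; lra.
- rewrite tv7 => i j nij.
  have hij : (i : nat) != j by [].
  have hp := pair7 (ltn_ord i) (ltn_ord j) hij.
  have e : cos (3 * (th i - th j)) = cos (3 * th i) * cos (3 * th j) + sin (3 * th i) * sin (3 * th j).
    by rewrite -cosB; congr cos; rewrite ?RealsE; ring.
  rewrite e cosB in hp.
  rewrite /A7 /B7 /dot /=.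
  transitivity (1 + (cos (th i) * cos (th j) + sin (th i) * sin (th j)) *
     (s7 ^+ 2 * (cos (3 * th i) * cos (3 * th j) + sin (3 * th i) * sin (3 * th j)) + h7 ^+ 2)).
    by ring.
  rewrite hs hh. lra.
Qed.


Theorem theorem6p8 :
  (exists Pi : 'I_7 -> 'M[R]_4, tight_simplex 2 4 _ Pi) /\
  (exists Pi : 'I_8 -> 'M[R]_4, tight_simplex 2 4 _ Pi).
Proof. split; [exact: part7 | exact: part8]. Qed.
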